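(* Let $\Delta$ be a pure quasi-forest of dimension $d-1$ with $f$-vector $(f_0,f_1,\ldots,f_{d-1})$. Then $(f_0,\ldots,f_{d-1})$ is unimodal, i.e., there is $j$ with $f_0\le f_1\le\cdots\le f_j\ge f_{j+1}\ge\cdots\ge f_{d-1}$.
   Context: A simplicial complex $\Delta$ on $[n]$ is a collection of subsets of $[n]$ containing all singletons and closed under taking subsets; $\dim\Delta=d-1$ where $d$ is the maximal face size; facets are maximal faces; $\Delta$ is pure if all facets have the same cardinality; $f_i$ is the number of faces with $i+1$ elements. For facets $F_{i_1},\ldots,F_{i_q}$, $\langle F_{i_1},\ldots,F_{i_q}\rangle$ is the subcomplex of all faces contained in some $F_{i_j}$. A facet $F$ is a leaf if there is another facet $G\neq F$ with $H\cap F\subset G\cap F$ for all facets $H\neq F$. A quasi-forest is a simplicial complex whose facets admit an ordering $H_1,\ldots,H_m$ such that for each $1<j\le m$, $H_j$ is a leaf of $\langle H_1,\ldots,H_j\rangle$. *)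

(* Defs.v *)
From mathcomp Require Import all_boot.
Set Implicit Arguments. Unset Strict Implicit. Unset Printing Implicit Defensive.

Definition is_simplicial_complex (n : nat) (D : {set {set 'I_n}}) : Prop :=
  (forall i : 'I_n, [set i] \in D) /\
  (forall F G : {set 'I_n}, F \in D -> G \subset F -> G \in D).

Definition facets (n : nat) (D : {set {set 'I_n}}) : {set {set 'I_n}} :=
  [set F in D | [forall G in D, (F \subset G) ==> (G == F)]].

(* d = maximal face size, so dim D = d - 1 *)
Definition face_size_max (n : nat) (D : {set {set 'I_n}}) : nat :=
  \max_(F in D) #|F|.

(* f_i = number of faces with i+1 elements *)
Definition fvec (n : nat) (D : {set {set 'I_n}}) (i : nat) : nat :=
  #|[set F in D | #|F| == i.+1]|.

Definition pure (n : nat) (D : {set {set 'I_n}}) : Prop :=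
  forall F G, F \in facets D -> G \in facets D -> #|F| = #|G|.

Definition gen_complex (n : nat) (s : seq {set 'I_n}) : {set {set 'I_n}} :=
  [set G : {set 'I_n} | has (fun F : {set 'I_n} => G \subset F) s].

Definition is_leaf (n : nat) (D : {set {set 'I_n}}) (F : {set 'I_n}) : Prop :=
  F \in facets D /\
  exists G, [/\ G \in facets D, G != F &
    forall H, H \in facets D -> H != F -> H :&: F \subset G :&: F].

(* ordering H_1,...,H_m of the facets such that H_j is a leaf of
   <H_1,...,H_j> for 1 < j <= m (0-based index j in [1, m)) *)
Definition quasi_forest (n : nat) (D : {set {set 'I_n}}) : Prop :=
  exists s : seq {set 'I_n},
    perm_eq s (enum (facets D)) /\
    forall j, 0 < j < size s -> is_leaf (gen_complex (take j.+1 s)) (nth set0 s j).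

Definition unimodal_upto (f : nat -> nat) (d : nat) : Prop :=
  exists j, (forall i, i < j -> i.+1 < d -> f i <= f i.+1) /\
            (forall i, j <= i -> i.+1 < d -> f i.+1 <= f i).

(* Main.v *)
Require Import Defs.
From mathcomp Require Import all_boot zify.
Set Implicit Arguments. Unset Strict Implicit.
Lemma bin_inc d s : 2 * s + 1 <= d -> 'C(d, s) <= 'C(d, s.+1).
Proof.
move=> h; have e := mul_bin_left d s.
have : s.+1 * 'C(d, s) <= s.+1 * 'C(d, s.+1).
  rewrite e; apply: leq_mul => //; lia.
by rewrite leq_pmul2l.
Qed.
Lemma bin_dec d s : d <= 2 * s + 1 -> 'C(d, s.+1) <= 'C(d, s).
Proof.
move=> h; have e := mul_bin_left d s.
have : s.+1 * 'C(d, s.+1) <= s.+1 * 'C(d, s).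
  rewrite e; apply: leq_mul => //; lia.
by rewrite leq_pmul2l.
Qed.
Lemma binA k d s : k <= d -> 2 * s + 1 <= d ->
  'C(d, s) + 'C(k, s.+1) <= 'C(d, s.+1) + 'C(k, s).
Proof.
move=> kd sd; case: (leqP k (2 * s + 1)) => hk.
  have := bin_inc sd; have := bin_dec hk; lia.
move: sd; rewrite -(subnK kd); elim: (d - k) => [|t IH] /= sd; first by rewrite addnC.
have IH' := IH ltac:(lia).
rewrite addSn; case: s IH' hk sd {IH} => [|s] IH' hk sd.
  rewrite !binS !bin0 in IH' *; lia.
rewrite !binS; have := @bin_inc (t + k) s ltac:(lia); lia.
Qed.
Lemma binB k d s : k <= d -> d <= 2 * s ->
  'C(d, s.+1) + 'C(k, s) <= 'C(d, s) + 'C(k, s.+1).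
Proof.
move=> kd; rewrite -(subnK kd); elim: (d - k) => [|t IH] /= sd; first by rewrite add0n addnC.
have IH' := IH ltac:(lia).
rewrite addSn; case: s IH' sd {IH} => [|s] IH' sd; first lia.
rewrite !binS; have := @bin_dec (t + k) s ltac:(lia); lia.
Qed.

Section Main.
Variable n : nat.
Variable D : {set {set 'I_n}}.
Hypothesis hD : is_simplicial_complex D.
Variable S : seq {set 'I_n}.
Hypothesis hS : perm_eq S (enum (facets D)).
Hypothesis hleaf : forall j, 0 < j < size S ->
  is_leaf (gen_complex (take j.+1 S)) (nth set0 S j).

Lemma facetsD F : F \in facets D -> F \in D.
Proof. by rewrite inE => /andP[]. Qed.

Lemma facet_max F G : F \in facets D -> G \in D -> F \subset G -> G = F.
Proof.
rewrite inE => /andP[_ /forallP h] GD FG.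
by move: (h G); rewrite GD FG => /eqP.
Qed.

Lemma memS H : (H \in S) = (H \in facets D).
Proof. by rewrite (perm_mem hS) mem_enum. Qed.

Lemma uniqS : uniq S.
Proof. by rewrite (perm_uniq hS) enum_uniq. Qed.

Lemma exists_facet F : F \in D -> exists2 H, H \in facets D & F \subset H.
Proof.
move=> FD; pose P := [pred G | (G \in D) && (F \subset G)].
have PF : P F by rewrite /= FD subxx.
case: (@arg_maxnP _ F P (fun G : {set 'I_n} => #|G|) PF) => G /andP[GD FG] Gmax.
exists G => //; rewrite inE GD; apply/forallP => X; apply/implyP => XD.
apply/implyP => GX; rewrite eq_sym eqEcard GX /=; apply: Gmax.
by rewrite /= XD (subset_trans FG GX).
Qed.

Lemma inD F : (F \in D) = has (fun H : {set 'I_n} => F \subset H) S.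
Proof.
apply/idP/hasP.
  by case/exists_facet => H HF FH; exists H => //; rewrite memS.
by case=> H HS FH; apply: hD.2 FH; apply: facetsD; rewrite -memS.
Qed.

Definition N j s := #|[set F : {set 'I_n} | (#|F| == s) && has (fun H : {set 'I_n} => F \subset H) (take j S)]|.

Lemma N0 s : N 0 s = 0.
Proof. by apply: eq_card0 => F; rewrite !inE take0 andbF. Qed.

Lemma Nstep j s : j < size S -> N j.+1 s = N j s +
  #|[set F : {set 'I_n} | (#|F| == s) && (F \subset nth set0 S j) && ~~ has (fun H : {set 'I_n} => F \subset H) (take j S)]|.
Proof.
move=> hj; rewrite /N -(cardsID [set F : {set 'I_n} | (#|F| == s) && has (fun H : {set 'I_n} => F \subset H) (take j S)]).
congr (_ + _); apply: eq_card => F; rewrite !inE (take_nth set0 hj) has_rcons.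
  by case: (_ == s); case: (F \subset nth set0 S j); case: (has _ (take j S)).
by case: (_ == s); case: (F \subset nth set0 S j); case: (has _ (take j S)).
Qed.

Lemma key j : 0 < j < size S -> exists K : {set 'I_n}, K \subset nth set0 S j /\
  forall F : {set 'I_n}, F \subset nth set0 S j -> has (fun H : {set 'I_n} => F \subset H) (take j S) = (F \subset K).
Proof.
move=> hj; have [_ [G [Gf GneH Hsub]]] := hleaf hj.
case/andP: hj => j0 js.
set Hj := nth set0 S j in Gf GneH Hsub *.
set T := take j.+1 S in Gf Hsub.
have HjnotT : Hj \notin take j S.
  have u := uniqS; rewrite -(cat_take_drop j S) cat_uniq in u; case/and3P: u => _ hh _.
  apply/negP => hin; case/negP: hh; apply/hasP; exists Hj => //.
  rewrite /Hj -{1}(addn0 j) -nth_drop; apply: mem_nth; rewrite size_drop subn_gt0 //.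
have facetT X : X \in take j S -> X \in facets (gen_complex T).
  move=> XS; rewrite inE; apply/andP; split.
    rewrite inE; apply/hasP; exists X; last exact: subxx.
    by rewrite /T (take_nth set0 js) mem_rcons in_cons XS orbT.
  apply/forallP => Y; apply/implyP; rewrite inE => /hasP[Z ZT YZ]; apply/implyP => XY.
  have ZS : Z \in S := mem_take ZT.
  have XS' : X \in S := mem_take XS.
  rewrite memS in XS'; rewrite memS in ZS.
  have ZX := facet_max XS' (facetsD ZS) (subset_trans XY YZ).
  by rewrite eqEsubset XY andbT -ZX.
exists (G :&: Hj); split; first exact: subsetIr.
move=> F FH; apply/idP/idP.
  case/hasP => X XT FX.
  have XneH : X != Hj by apply/negP => /eqP e; move: HjnotT; rewrite -e XT.
  have XG := Hsub X (facetT X XT) XneH.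
  by apply: subset_trans XG; rewrite subsetI FX FH.
move=> FK; rewrite inE in Gf; case/andP: Gf => GT Gmax.
rewrite inE in GT; case/hasP: GT => Z; rewrite /T (take_nth set0 js) mem_rcons in_cons.
case/orP => [/eqP ZH | ZT] GZ.
  have HjT : Hj \in gen_complex T.
    rewrite inE; apply/hasP; exists Hj; last exact: subxx.
    by rewrite /T (take_nth set0 js) mem_rcons in_cons eqxx.
  rewrite ZH -/Hj in GZ.
  move/forallP: Gmax => /(_ Hj); rewrite HjT GZ /= => /eqP e.
  by move: GneH; rewrite e eqxx.
apply/hasP; exists Z => //; apply: subset_trans GZ.
exact: subset_trans FK (subsetIl _ _).
Qed.

Definition newset j s := [set F : {set 'I_n} | (#|F| == s) && (F \subset nth set0 S j) && ~~ has (fun H : {set 'I_n} => F \subset H) (take j S)].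

Lemma term_pos j : 0 < j < size S -> exists k, k <= #|nth set0 S j| /\
  forall s, #|newset j s| + 'C(k, s) = 'C(#|nth set0 S j|, s).
Proof.
move=> hj; case: (key hj) => K [KH hK]; exists #|K|; split; first exact: subset_leq_card.
move=> s.
rewrite -!cards_draws -(cardsID [set F : {set 'I_n} | F \subset K & #|F| == s] [set F : {set 'I_n} | F \subset nth set0 S j & #|F| == s]).
rewrite addnC; congr (_ + _); apply: eq_card => F; rewrite !inE.
  case FK: (F \subset K); last by rewrite andbF.
  by rewrite (subset_trans FK KH) andbb.
case FH: (F \subset nth set0 S j); last by rewrite andbF /= andbF.
by rewrite (hK F FH); case: (_ == s); case: (F \subset K).
Qed.

Lemma term0 s : #|newset 0 s| = 'C(#|nth set0 S 0|, s).
Proof.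
rewrite -cards_draws; apply: eq_card => F; rewrite !inE take0 /= andbT andbC //.
Qed.

End Main.

Theorem theorem3p2 (n : nat) (D : {set {set 'I_n}}) :
  is_simplicial_complex D -> pure D -> quasi_forest D ->
  unimodal_upto (fvec D) (face_size_max D).
Proof.
move=> hD hP [S [hS hleaf]].
set d := face_size_max D.
have Hd H : H \in S -> #|H| = d.
  rewrite (memS hS) => HF; apply/eqP; rewrite eqn_leq; apply/andP; split.
    rewrite /d /face_size_max; apply: (@leq_bigmax_cond _ (fun F => F \in D) (fun F : {set 'I_n} => #|F|)); exact: facetsD.
  apply/bigmax_leqP => F FD; case: (exists_facet FD) => H' H'F FH'.
  by rewrite (hP H H' HF H'F); apply: subset_leq_card.
have fN i : fvec D i = N S (size S) i.+1.
  rewrite /fvec /N take_size; apply: eq_card => F; rewrite !inE (inD hD hS) andbC //.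
have claim j : j <= size S -> forall s,
    (2 * s + 1 <= d -> N S j s <= N S j s.+1) /\ (d <= 2 * s -> N S j s.+1 <= N S j s).
  elim: j => [|j IH] hj s; first by rewrite !N0.
  have js : j < size S by [].
  have [IH1 IH2] := IH (ltnW hj) s.
  have hd : #|nth set0 S j| = d by apply: Hd; apply: mem_nth.
  rewrite !(Nstep _ js).
  have E : forall t, #|[set F : {set 'I_n} | (#|F| == t) && (F \subset nth set0 S j) && ~~ has (fun H : {set 'I_n} => F \subset H) (take j S)]| = #|newset S j t| by [].
  rewrite !E.
  case: (posnP j) => [j0 | jpos].
    subst j; rewrite !term0 hd.
    rewrite !N0; have := @bin_inc d s; have := @bin_dec d s; split; lia.
  have hj' : 0 < j < size S by rewrite jpos js.
  have [k [kd e]] := term_pos hS hleaf hj'.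
  have e1 := e s; have e2 := e s.+1; rewrite hd in kd e1 e2.
  have := @binA k d s kd; have := @binB k d s kd; split; lia.
exists ((d.-1) %/ 2); split => i hi hid; rewrite !fN.
  by apply: (claim (size S) (leqnn _) i.+1).1; lia.
by apply: (claim (size S) (leqnn _) i.+1).2; lia.
Qed.
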